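(* Let $G$ be a non-complete double-critical $k$-chromatic graph. For every edge $xy\in E(G)$, every $(k-2)$-colouring of $G-x-y$ with colour set $[k-2]=\{1,\dots,k-2\}$, and every non-empty sequence $j_1,j_2,\dots,j_i$ of $i$ pairwise distinct colours from $[k-2]$, there is a path of order $i+2$ starting at $x$ and ending at $y$ whose $t$-th vertex after $x$ has colour $j_t$ for all $t\in[i]$. In particular, $xy$ is contained in at least $(k-2)!/(k-2-i)!$ cycles of length $i+2$.
   Context: All graphs are finite and simple. A graph $G$ is (vertex-)critical if $\chi(G-v)<\chi(G)$ for every vertex $v\in V(G)$. A critical graph $G$ is double-critical if $\chi(G-x-y)\le\chi(G)-2$ for every edge $xy\in E(G)$. The order of a path is its number of vertices; the length of a cycle is its number of edges. *)

(* Defs.v *)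
(* A simple graph is a symmetric irreflexive relation
   e : rel T on a finType T (hypotheses stated in the theorem). *)
From mathcomp Require Import all_boot.
Set Implicit Arguments. Unset Strict Implicit. Unset Printing Implicit Defensive.

Section Graphs.
Variables (T : finType) (e : rel T).

Definition colourable (S : {set T}) (n : nat) : bool :=
  [exists f : {ffun T -> 'I_n},
     [forall u in S, forall v in S, e u v ==> (f u != f v)]].

(* Chromatic number of the induced subgraph G[S]: the least n <= #|T| such
   that G[S] is n-colourable (for an irreflexive e, #|T| colours always
   suffice, so this is the chromatic number). *)
Definition chi (S : {set T}) : nat :=
  \big[minn/#|T|]_(n < #|T|.+1 | colourable S n) n.

Definition chiG : nat := chi [set: T].

Definition critical : Prop :=
  forall v : T, chi ([set: T] :\ v) < chiG.

Definition double_critical : Prop :=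
  critical /\ forall x y : T, e x y -> chi ([set: T] :\ x :\ y) <= chiG - 2.

Definition complete : Prop := forall u v : T, u != v -> e u v.

Definition proper_colouring (n : nat) (S : {set T}) (c : T -> 'I_n) : Prop :=
  forall u v, u \in S -> v \in S -> e u v -> c u != c v.

(* C (a set of 2-element vertex sets = edges) is the edge set of a cycle of
   G of length L (L >= 3). *)
Definition is_cycle_of_length (L : nat) (C : {set {set T}}) : bool :=
  (2 < L) &&
  [exists vs : L.-tuple T,
     [&& uniq vs, cycle e vs &
         C == [set [set p.1; p.2] | p in zip vs (rot 1 vs)]]].

End Graphs.

(* Main.v *)
From Stdlib Require Import Classical.
From mathcomp Require Import all_boot zify.
Require Import Defs.
Set Implicit Arguments. Unset Strict Implicit. Unset Printing Implicit Defensive.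

Section Chi.
Variables (T : finType) (e : rel T).

Lemma chi_le_card S : chi e S <= #|T|.
Proof.
rewrite /chi; elim/big_ind: _ => //; first by move=> a b Ha _; rewrite geq_min Ha.
by move=> i _; rewrite -ltnS.
Qed.

Lemma chi_le S m : colourable e S m -> m <= #|T| -> chi e S <= m.
Proof.
move=> Hc Hm; rewrite /chi.
have : Ordinal (Hm : m < #|T|.+1) \in index_enum 'I_#|T|.+1 by rewrite mem_index_enum.
elim: (index_enum _) => [|a r IH] //; rewrite inE big_cons.
case/orP=> [/eqP <-|H]; first by rewrite /= Hc geq_minl.
case: ifP => _; last exact: IH.
by rewrite geq_min IH ?orbT.
Qed.

Lemma colourable_card S : irreflexive e -> colourable e S #|T|.
Proof.
move=> eirr; apply/existsP; exists [ffun v => enum_rank v].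
apply/forallP=> u; apply/implyP=> _; apply/forallP=> v; apply/implyP=> _.
apply/implyP=> uv; rewrite !ffunE; apply: contraL uv => /eqP/enum_rank_inj->.
by rewrite eirr.
Qed.

Lemma colourable_chi S : irreflexive e -> colourable e S (chi e S).
Proof.
move=> eirr; rewrite /chi; elim/big_ind: _ => //; first exact: colourable_card.
by move=> a b Ha Hb; rewrite /minn; case: ifP.
Qed.

Lemma colouring_of S m n : colourable e S m -> m <= n ->
  exists c : T -> 'I_n, proper_colouring e S c.
Proof.
move=> /existsP[f /forallP Hf] mn; exists (fun v => widen_ord mn (f v)).
move=> u v uS vS uv; have /implyP/(_ uS)/forallP/(_ v)/implyP/(_ vS)/implyP/(_ uv) := Hf u.
by apply: contra => /eqP E; apply/eqP/val_inj; have := congr1 val E.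
Qed.

End Chi.
Section Cyc.
Variable T : finType.

Fixpoint pedges (s : seq T) : {set {set T}} :=
  match s with
  | a :: ((b :: _) as s') => [set a; b] |: pedges s'
  | _ => set0
  end.

Lemma pedgesE a b s : pedges (a :: b :: s) = [set a; b] |: pedges (b :: s).
Proof. by []. Qed.

Lemma pedges_mem s E z : E \in pedges s -> z \in E -> z \in s.
Proof.
elim: s => [|a [|b s] IH]; try by rewrite inE.
rewrite pedgesE in_setU1 => /orP[/eqP->|H]; first by rewrite !inE => /orP[]->; rewrite ?orbT.
by move=> Hz; rewrite inE (IH H Hz) orbT.
Qed.

Lemma pedges_inj x r r' : uniq (x :: r) -> uniq (x :: r') ->
  pedges (x :: r) = pedges (x :: r') -> r = r'.
Proof.
elim: r x r' => [|a q IH] x [|a' q'] //=.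
- move=> _ _ /setP/(_ [set x; a']); by rewrite !inE eqxx.
- move=> _ _ /setP/(_ [set x; a]); by rewrite !inE eqxx.
rewrite !inE !negb_or => /andP[/andP[xa xq] uq] /andP[/andP[xa' xq'] uq'] E.
have Hx' : [set x; a] \notin pedges (a' :: q').
  apply/negP=> H; have := pedges_mem H (set21 x a).
  by rewrite inE (negbTE xa') (negbTE xq').
have Hx : [set x; a] \notin pedges (a :: q).
  apply/negP=> H; have := pedges_mem H (set21 x a).
  by rewrite inE (negbTE xa) (negbTE xq).
have : [set x; a] \in [set x; a'] |: pedges (a' :: q') by rewrite -E setU11.
rewrite in_setU1 => /orP[/eqP Eq|]; last by rewrite (negbTE Hx').
have : a \in [set x; a'] by rewrite -Eq set22.
rewrite !inE eq_sym (negbTE xa) /= => /eqP Eaa.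
subst a'; congr (_ :: _); apply: (IH a) => //.
by rewrite -(setU1K Hx) -(setU1K Hx') E.
Qed.

Lemma zip_rcons_imset (a b : T) s :
  [set [set q.1; q.2] | q in zip (a :: s) (rcons s b)] =
  [set last a s; b] |: pedges (a :: s).
Proof.
elim: s a => [|c s IH] a.
  apply/setP=> E; rewrite !inE orbF; apply/imsetP/eqP => [[q]|->].
    by rewrite inE => /eqP -> ->.
  by exists (a, b); rewrite ?inE.
rewrite [last _ _]/= [pedges _]pedgesE setUCA -IH; apply/setP=> E; rewrite !inE; apply/imsetP/idP.
  case=> q; rewrite inE => /orP[/eqP->->|Hq ->]; first by rewrite eqxx.
  by apply/orP; right; apply/imsetP; exists q.
case/orP=> [/eqP->|/imsetP[r Hr ->]]; first by exists (a, c); rewrite // inE eqxx.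
by exists r; rewrite // inE Hr orbT.
Qed.

End Cyc.
Section Cyc2.
Variables (T : finType) (e : rel T) (x y : T).

Definition cyc (p : seq T) : {set {set T}} :=
  [set [set q.1; q.2] | q in zip (x :: rcons p y) (rot 1 (x :: rcons p y))].

Lemma cycE p : cyc p = [set y; x] |: pedges (x :: rcons p y).
Proof. by rewrite /cyc rot1_cons zip_rcons_imset last_rcons. Qed.

Lemma notin_pedges p : 0 < size p -> uniq (x :: rcons p y) ->
  [set y; x] \notin pedges (x :: rcons p y).
Proof.
case: p => [|a q] // _ U; rewrite rcons_cons pedgesE in_setU1 negb_or.
rewrite /= -!cats1 !mem_cat !inE !negb_or !mem_cat !inE !negb_or in U.
case/and3P: U => /andP[xa /andP[xq xy]] /andP[_ ya] _.
apply/andP; split.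
  apply/negP=> /eqP E; have : y \in [set x; a] by rewrite -E set21.
  by rewrite !inE eq_sym (negbTE xy) eq_sym (negbTE ya).
apply/negP=> H; have := pedges_mem H (set22 y x).
by rewrite inE -cats1 mem_cat !inE (negbTE xa) (negbTE xq) (negbTE xy).
Qed.

Lemma cyc_inj p1 p2 : 0 < size p1 -> 0 < size p2 ->
  uniq (x :: rcons p1 y) -> uniq (x :: rcons p2 y) -> cyc p1 = cyc p2 -> p1 = p2.
Proof.
move=> s1 s2 u1 u2; rewrite !cycE => E.
have := notin_pedges s1 u1; have := notin_pedges s2 u2 => n2 n1.
apply: (@rcons_injl _ y); apply: (pedges_inj u1 u2).
by rewrite -(setU1K n1) -(setU1K n2) E.
Qed.

Lemma cyc_is_cycle i p : size p = i -> 0 < i -> uniq (x :: rcons p y) ->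
  path e x (rcons p y) -> e y x ->
  is_cycle_of_length e (i + 2) (cyc p) && ([set x; y] \in cyc p).
Proof.
move=> sp i0 U P yx.
have -> : [set x; y] \in cyc p by rewrite cycE (setUC [set x]) setU11.
rewrite andbT.
rewrite /is_cycle_of_length addn2 ltnS ltnS i0 /=.
have Hs : size (x :: rcons p y) == i.+2 by rewrite /= size_rcons sp.
apply/existsP; exists (Tuple Hs).
have -> : (Tuple Hs : seq T) = x :: rcons p y by [].
rewrite U /= rcons_path P last_rcons yx /=.
by rewrite /cyc.
Qed.

End Cyc2.

Section Part1.
Variables (T : finType) (e : rel T) (x y : T) (n : nat) (c : T -> 'I_n)
  (js : seq 'I_n) (j0 : 'I_n).
Hypotheses (esym : symmetric e) (eirr : irreflexive e) (exy : e x y)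
  (cprop : proper_colouring e ([set: T] :\ x :\ y) c) (ujs : uniq js).

Let S := [set: T] :\ x :\ y.

Definition reach (t : nat) (v : T) : bool :=
  (t < size js) && (c v == nth j0 js t) &&
  [exists p : t.+1.-tuple T, [&& path e x p, last x p == v,
     all (fun u => u \in S) p & map c p == take t.+1 js]].

Definition Rv (v : T) : bool := (c v \in js) && reach (index (c v) js) v.

Lemma reach_R t v : reach t v -> Rv v.
Proof.
move=> H; have := H; case/andP=> /andP[lt /eqP cv] _.
by rewrite /Rv cv mem_nth // index_uniq.
Qed.

Lemma R_reach v : Rv v -> reach (index (c v) js) v.
Proof. by case/andP. Qed.

Lemma reach0 v : e x v -> v \in S -> c v = nth j0 js 0 -> 0 < size js -> reach 0 v.
Proof.
move=> xv vS cv lt; rewrite /reach lt cv eqxx /=.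
apply/existsP; exists (cons_tuple v [tuple]). rewrite /= xv eqxx vS cv /=.
by move: lt; case: (js) => [|a s] //=; rewrite take0 eqxx.
Qed.

Lemma reachS t u v : reach t u -> e u v -> v \in S -> c v = nth j0 js t.+1 ->
  t.+1 < size js -> reach t.+1 v.
Proof.
case/andP=> /andP[lt _] /existsP[p /and4P[pp /eqP lp ap mp]] uv vS cv lt'.
rewrite /reach lt' cv eqxx /=; apply/existsP; exists (rcons_tuple p v).
rewrite /= rcons_path pp lp uv last_rcons eqxx all_rcons vS ap /=.
by rewrite map_rcons (eqP mp) cv -take_nth.
Qed.

Lemma reach_end t v : reach t v -> t.+1 = size js -> e v y ->
  exists p : seq T,
    [/\ size p = size js, uniq (x :: rcons p y), path e x (rcons p y)
      & map c p = js].
Proof.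
case/andP=> _ /existsP[p /and4P[pp /eqP lp ap /eqP mp]] ts vy.
exists p; split; first by rewrite size_tuple ts.
- have up : uniq p by apply: (map_uniq (f := c)); rewrite mp take_uniq.
  have nS z : z \in p -> z \in S by move/allP: ap; apply.
  rewrite /= rcons_uniq up mem_rcons !inE negb_or andbT.
  have xy : x != y by apply/eqP=> E; move: exy; rewrite E eirr.
  rewrite xy; apply/andP; split; apply/negP => /nS; rewrite /S !inE eqxx //.
  by rewrite andbF.
- by rewrite rcons_path pp lp vy.
- by rewrite mp ts take_size.
Qed.

Hypothesis js0 : 0 < size js.
Hypothesis nopath : ~ exists p : seq T,
    [/\ size p = size js, uniq (x :: rcons p y), path e x (rcons p y)
      & map c p = js].

Definition nxt t : nat := if t.+1 < size js then nth j0 js t.+1 : nat else n.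
Definition g v : nat :=
  if v == x then (nth j0 js 0 : nat) else if v == y then n
  else if Rv v then nxt (index (c v) js) else c v.

Lemma inS v : v \in S = (v != y) && (v != x).
Proof. by rewrite /S !inE andbT. Qed.

Lemma gS v : v \in S -> g v = if Rv v then nxt (index (c v) js) else c v.
Proof. by rewrite inS /g => /andP[/negbTE-> /negbTE->]. Qed.

Lemma reach_info t v : reach t v -> (t < size js) /\ c v = nth j0 js t.
Proof. by case/andP=> /andP[? /eqP ?]. Qed.

Lemma nxt_le t : nxt t <= n.
Proof. by rewrite /nxt; case: ifP => // _; apply: ltnW. Qed.

Lemma g_le v : g v <= n.
Proof.
rewrite /g; case: ifP => _; first exact: ltnW.
case: ifP => // _; case: ifP => _; [exact: nxt_le | exact: ltnW].
Qed.

Lemma L_SS_R u v : u \in S -> v \in S -> e u v -> Rv u -> g u != g v.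
Proof.
move=> uS vS uv Ru; rewrite (gS uS) (gS vS) Ru.
have [tu cu] := reach_info (R_reach Ru).
set a := index (c u) js in tu cu *.
case Rv_v: (Rv v).
  have [tv cv] := reach_info (R_reach Rv_v).
  set b := index (c v) js in tv cv *.
  have ab : a != b.
    apply/eqP=> E; have := cprop uS vS uv; by rewrite cu cv E eqxx.
  rewrite /nxt; case: ifP => ha; case: ifP => hb.
  - have -> : (nat_of_ord (nth j0 js a.+1) == nth j0 js b.+1) =
              (nth j0 js a.+1 == nth j0 js b.+1) by [].
    by rewrite nth_uniq.
  - by rewrite ltn_eqF.
  - by rewrite eq_sym ltn_eqF.
  - move/negbT: ha; move/negbT: hb; rewrite -!leqNgt => hb ha.
    by move: ab; rewrite eqn_leq -ltnS (leq_trans tu hb) -ltnS (leq_trans tv ha).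
rewrite /nxt; case: ifP => ha; last by rewrite eq_sym ltn_eqF.
apply/negP=> /eqP E.
have cv : c v = nth j0 js a.+1 by apply: val_inj; rewrite /= -E.
have := reach_R (reachS (R_reach Ru) uv vS cv ha); by rewrite Rv_v.
Qed.

Lemma L_xS v : v \in S -> e x v -> g x != g v.
Proof.
move=> vS xv; rewrite (gS vS) /g eqxx.
case Rv_v: (Rv v).
  have [tv cv] := reach_info (R_reach Rv_v).
  rewrite /nxt; case: ifP => hb; last by rewrite ltn_eqF.
  have -> : (nat_of_ord (nth j0 js 0) == nth j0 js (index (c v) js).+1) =
              (nth j0 js 0 == nth j0 js (index (c v) js).+1) by [].
  by rewrite nth_uniq.
apply/negP=> /eqP E.
have cv : c v = nth j0 js 0 by apply: val_inj; rewrite /= -E.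
have := reach_R (reach0 xv vS cv js0); by rewrite Rv_v.
Qed.

Lemma L_yS v : v \in S -> e y v -> g y != g v.
Proof.
move=> vS yv; rewrite (gS vS).
have xy : y != x by apply/eqP=> E; move: exy; rewrite E eirr.
rewrite /g (negbTE xy) eqxx.
case Rv_v: (Rv v); last by rewrite eq_sym ltn_eqF.
have [tv cv] := reach_info (R_reach Rv_v).
rewrite /nxt; case: ifP => hb; first by rewrite eq_sym ltn_eqF.
exfalso; apply: nopath; apply: (reach_end (R_reach Rv_v)).
  by apply/eqP; rewrite eqn_leq tv leqNgt hb.
by rewrite esym.
Qed.

Lemma g_proper u v : e u v -> g u != g v.
Proof.
have xy : x != y by apply/eqP=> E; move: exy; rewrite E eirr.
have yx : y != x by rewrite eq_sym.
have gxy : g x != g y.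
  by rewrite /g eqxx eq_sym (negbTE yx) eqxx eq_sym ltn_eqF.
have key : forall u v, u \in S -> e u v -> g u != g v.
  move=> a b aS ab.
  case: (boolP (b == x)) => [/eqP Eb|bx].
    by subst b; rewrite eq_sym; apply: L_xS => //; rewrite esym.
  case: (boolP (b == y)) => [/eqP Eb|byy].
    by subst b; rewrite eq_sym; apply: L_yS => //; rewrite esym.
  have bS : b \in S by rewrite inS bx byy.
  case Ra: (Rv a); first exact: L_SS_R.
  case Rb: (Rv b); first by rewrite eq_sym; apply: L_SS_R => //; rewrite esym.
  by rewrite (gS aS) (gS bS) Ra Rb; apply: cprop.
move=> uv.
case: (boolP (u \in S)) => [uS|]; first exact: key.
rewrite inS negb_and !negbK => /orP[]/eqP Eu; subst u.
  case: (boolP (v \in S)) => [vS|]; first by rewrite eq_sym; apply: key; rewrite // esym.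
  rewrite inS negb_and !negbK => /orP[]/eqP E; subst v.
    by move: uv; rewrite eirr.
  by rewrite eq_sym.
case: (boolP (v \in S)) => [vS|]; first by rewrite eq_sym; apply: key; rewrite // esym.
rewrite inS negb_and !negbK => /orP[]/eqP E; subst v; first by [].
by move: uv; rewrite eirr.
Qed.

Lemma colourable_contra : colourable e [set: T] n.+1.
Proof.
apply/existsP; exists [ffun v => inord (g v) : 'I_n.+1].
apply/forallP=> u; apply/implyP=> _; apply/forallP=> v; apply/implyP=> _.
apply/implyP=> uv; rewrite !ffunE.
have := g_proper uv; apply: contra => /eqP E.
have := congr1 val E; rewrite /= !inordK ?ltnS ?g_le // => ->; by [].
Qed.

End Part1.

Theorem proposition4 (T : finType) (e : rel T) (k : nat) :
  symmetric e -> irreflexive e ->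
  ~ complete e -> double_critical e -> chiG e = k ->
  forall x y : T, e x y ->
    (forall c : T -> 'I_(k - 2),
       proper_colouring e ([set: T] :\ x :\ y) c ->
       forall js : seq 'I_(k - 2), uniq js -> 0 < size js ->
       exists p : seq T,
         [/\ size p = size js, uniq (x :: rcons p y), path e x (rcons p y)
           & map c p = js])
    /\
    (forall i : nat, 1 <= i <= k - 2 ->
       (k - 2)`! %/ (k - 2 - i)`! <=
       #|[set C : {set {set T}} | is_cycle_of_length e (i + 2) C
                                  & [set x; y] \in C]|).
Proof.
move=> esym eirr _ [_ dc] chik x y exy.
have part1 : forall c : T -> 'I_(k - 2),
       proper_colouring e ([set: T] :\ x :\ y) c ->
       forall js : seq 'I_(k - 2), uniq js -> 0 < size js ->
       exists p : seq T,
         [/\ size p = size js, uniq (x :: rcons p y), path e x (rcons p y)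
           & map c p = js].
  move=> c cp js ujs js0.
  have j0 : 'I_(k - 2) by move: js0; case: (js) => [|a l] //.
  have k3 : 0 < k - 2 by exact: (leq_ltn_trans (leq0n _) (ltn_ord j0)).
  case: (classic (exists p : seq T,
         [/\ size p = size js, uniq (x :: rcons p y), path e x (rcons p y)
           & map c p = js])) => // np.
  have col := colourable_contra j0 esym eirr exy cp ujs js0 np.
  have kT : k <= #|T| by rewrite -chik; apply: chi_le_card.
  have H1 : (k - 2).+1 <= #|T| by lia.
  have := chi_le col H1; rewrite -/(chiG e) chik; lia.
split => //.
move=> i /andP[i1 ik].
have [c cp] : exists c : T -> 'I_(k - 2), proper_colouring e ([set: T] :\ x :\ y) c.
  apply: (colouring_of (colourable_chi _ eirr)).
  by rewrite -chik; apply: dc.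
have yx : e y x by rewrite esym.
pose good (t : i.-tuple 'I_(k - 2)) (p : i.-tuple T) :=
  uniq (x :: rcons p y) && path e x (rcons p y) && (map c p == t).
pose h t := if [pick p | good t p] is Some p then cyc x y p else set0.
pose A := [set t : i.-tuple 'I_(k - 2) | all predT t & uniq t].
have hA : forall t, t \in A -> exists p, [pick p | good t p] = Some p /\ good t p.
  move=> t; rewrite inE => /andP[_ ut].
  have st : 0 < size t by rewrite size_tuple.
  have [p [sp up pp mp]] := part1 c cp t ut st.
  have Hs : size p == i by rewrite sp size_tuple.
  case: pickP => [q Hq|H]; first by exists q.
  have := H (Tuple Hs); rewrite /good.
  have -> : (Tuple Hs : seq T) = p by [].
  by rewrite up pp mp eqxx.
have cardA : #|A| = (k - 2)`! %/ (k - 2 - i)`!.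
  by rewrite card_uniq_tuples card_ord ffact_factd.
rewrite -cardA -(card_in_imset (f := h)).
  apply: subset_leq_card; apply/subsetP => C /imsetP[t tA ->].
  have [p [Hp /andP[/andP[up pp] _]]] := hA t tA.
  rewrite inE /h Hp; apply: (cyc_is_cycle (i := i)) => //; by rewrite size_tuple.
move=> t1 t2 t1A t2A; rewrite /h.
have [p1 [Hp1 /andP[/andP[up1 pp1] /eqP mp1]]] := hA t1 t1A.
have [p2 [Hp2 /andP[/andP[up2 pp2] /eqP mp2]]] := hA t2 t2A.
rewrite Hp1 Hp2 => E.
have := cyc_inj _ _ up1 up2 E; rewrite !size_tuple => /(_ i1 i1) Ep.
by apply: val_inj; rewrite /= -mp1 -mp2 Ep.
Qed.
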